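(* (a) $\Delta'\in\mathbb{Q}[x_0,\ldots,x_4]$ is a symmetric polynomial, homogeneous of degree eight, and absolutely irreducible. (b) One has $\Delta'(0,x_1,\ldots,x_4)=D^2$ for a symmetric, homogeneous quartic form $D\in\mathbb{Q}[x_1,\ldots,x_4]$.
   Context: $$\Delta'(x_0,\ldots,x_4):=\prod_{i_1,\ldots,i_4\in\{0,1\}}\big(\sqrt{x_0}+(-1)^{i_1}\sqrt{x_1}+(-1)^{i_2}\sqrt{x_2}+(-1)^{i_3}\sqrt{x_3}+(-1)^{i_4}\sqrt{x_4}\big),$$ a priori an element of $\mathbb{Q}[\sqrt{x_0},\ldots,\sqrt{x_4}]$. *)

(* Defs.v *)
From HB Require Import structures.
From mathcomp Require Import all_boot all_order all_algebra all_field.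
From mathcomp Require Import mpoly.
Set Implicit Arguments. Unset Strict Implicit. Unset Printing Implicit Defensive.
Import GRing.Theory.
Local Open Scope ring_scope.

(* Variables y_0..y_4 of {mpoly rat[5]} stand for sqrt(x_0), ..., sqrt(x_4).
   A sign choice (i_1,...,i_4) in {0,1}^4 is a finite function 'I_4 -> bool. *)
Definition sqrt_factor (s : {ffun 'I_4 -> bool}) : {mpoly rat[5]} :=
  'X_ord0 + \sum_(i < 4) (-1) ^+ (s i) * 'X_(lift ord0 i).

(* Delta' written in the square roots: an element of Q[sqrt x_0,...,sqrt x_4]. *)
Definition DeltaSqrt : {mpoly rat[5]} :=
  \prod_(s : {ffun 'I_4 -> bool}) sqrt_factor s.

Definition squares (n : nat) : n.-tuple {mpoly rat[n]} :=
  [tuple ('X_i) ^+ 2 | i < n].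

Definition irreducible_mpoly (R : idomainType) (n : nat) (p : {mpoly R[n]}) :=
  [/\ p != 0, p \isn't a GRing.unit &
      forall a b : {mpoly R[n]}, p = a * b -> a \is a GRing.unit \/ b \is a GRing.unit].

Definition abs_irreducible_rat (n : nat) (p : {mpoly rat[n]}) :=
  irreducible_mpoly (map_mpoly (ratr : rat -> algC) p).

Definition set_x0_zero : 5.-tuple {mpoly rat[4]} :=
  [tuple of [:: 0; 'X_0; 'X_1; 'X_2; 'X_3]].

(* Main.v *)
Require Import Defs.
From HB Require Import structures.
From mathcomp Require Import all_boot all_order all_algebra all_field.
From mathcomp Require Import mpoly.
From mathcomp Require Import fingroup perm.
Set Implicit Arguments. Unset Strict Implicit. Unset Printing Implicit Defensive.
Import GRing.Theory.
Local Open Scope ring_scope.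

Section Gen.
Context (R : comNzRingType).

Lemma comp_mpolyA n k l (p : {mpoly R[n]}) (t : n.-tuple {mpoly R[k]})
  (u : k.-tuple {mpoly R[l]}) :
  (p \mPo t) \mPo u = p \mPo [tuple (tnth t i \mPo u) | i < n].
Proof.
rewrite (comp_mpolyEX p t) (comp_mpolyEX p [tuple _ | i < n]) raddf_sum.
apply: eq_bigr => m _.
rewrite [LHS]linearZ /= !comp_mpolyX rmorph_prod /=; congr (_ *: _).
by apply: eq_bigr => i _; rewrite rmorphXn /= tnth_mktuple.
Qed.

Lemma comp_mpolyXt n k (i : 'I_n) (t : n.-tuple {mpoly R[k]}) :
  'X_i \mPo t = tnth t i.
Proof. by rewrite comp_mpolyXU -tnth_nth. Qed.

Lemma comp_id_tuple n (p : {mpoly R[n]}) (t : n.-tuple {mpoly R[n]}) :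
  (forall i, tnth t i = 'X_i) -> p \mPo t = p.
Proof.
move=> H; rewrite -[RHS](comp_mpoly_id p); congr (_ \mPo _).
by apply: eq_from_tnth => i; rewrite H tnth_mktuple.
Qed.

Lemma comp_ext n k (p : {mpoly R[n]}) (t u : n.-tuple {mpoly R[k]}) :
  (forall i, tnth t i = tnth u i) -> p \mPo t = p \mPo u.
Proof. by move=> H; congr (_ \mPo _); apply: eq_from_tnth. Qed.

Lemma mcoeff_sumg n (p : {mpoly R[n]}) (f : 'X_{1..n} -> R)
   (g : 'X_{1..n} -> 'X_{1..n}) k :
  injective g ->
  (\sum_(m <- msupp p) (p@_m * f m) *: 'X_[g m])@_(g k) = p@_k * f k.
Proof.
move=> ig; rewrite raddf_sum /=.
under eq_bigr => m _ do rewrite mcoeffZ mcoeffX (inj_eq ig).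
case: (boolP (k \in msupp p)) => kp.
  rewrite (bigD1_seq k) //= ?msupp_uniq // eqxx mulr1 big1 ?addr0 // => m.
  by rewrite eq_sym => /negbTE ->; rewrite mulr0.
rewrite big1_seq; last first.
  move=> m /= mp; case: eqP => [e|_]; last by rewrite mulr0.
  by move: kp; rewrite -e mp.
by rewrite memN_msupp_eq0 // mul0r.
Qed.

Definition sqt n : n.-tuple {mpoly R[n]} := [tuple ('X_i) ^+ 2 | i < n].

Lemma compX_sqt n (m : 'X_{1..n}) : 'X_[m] \mPo sqt n = 'X_[m *+ 2].
Proof.
rewrite comp_mpolyX -mpolyXn mpolyXE_id -prodrXl; apply: eq_bigr => i _.
by rewrite tnth_mktuple -!exprM mulnC.
Qed.

Lemma comp_sqtE n (q : {mpoly R[n]}) :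
  q \mPo sqt n = \sum_(m <- msupp q) (q@_m * 1) *: 'X_[m *+ 2].
Proof.
rewrite comp_mpolyEX; apply: eq_bigr => m _; by rewrite compX_sqt mulr1.
Qed.

Lemma mulmn2_inj n : injective (fun m : 'X_{1..n} => (m *+ 2)%MM).
Proof.
move=> m1 m2 /= e; apply/mnmP => i.
have := congr1 (fun m : 'X_{1..n} => m i) e; rewrite /= !mulmnE.
by move/eqP; rewrite eqn_pmul2r // => /eqP.
Qed.

Lemma mcoeff_sqt n (q : {mpoly R[n]}) k : (q \mPo sqt n)@_(k *+ 2) = q@_k.
Proof.
by rewrite comp_sqtE (mcoeff_sumg _ _ _ (@mulmn2_inj n)) mulr1.
Qed.

Lemma sqt_inj n : injective (comp_mpoly (sqt n)).
Proof.
move=> p q e; apply/mpolyP => k.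
by rewrite -(mcoeff_sqt p) -(mcoeff_sqt q) /= e.
Qed.

End Gen.

Section Gen2.
Context (R : comNzRingType).

Lemma halve n (p : {mpoly R[n]}) :
  (forall m, m \in msupp p -> forall j, ~~ odd (m j)) -> exists q, p = q \mPo sqt R n.
Proof.
move=> H; exists (\sum_(m <- msupp p) p@_m *: 'X_[[multinom (m j)./2 | j < n]]).
rewrite linear_sum {1}[p]mpolyE; apply: eq_big_seq => m mp.
rewrite linearZ /= compX_sqt; congr (_ *: 'X_[_]).
apply/mnmP => j; rewrite mulmnE mnmE muln2 -[LHS]odd_double_half.
by rewrite (negbTE (H m mp j)) add0n.
Qed.

Lemma msym_comp n (s : 'S_n) (p : {mpoly R[n]}) :
  msym s p = p \mPo [tuple 'X_(s i) | i < n].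
Proof.
rewrite -[msym s p](comp_mpoly_id (msym s p)) msym_mPo.
by apply: comp_ext => i; rewrite !tnth_mktuple.
Qed.

Lemma msym_sqt n (s : 'S_n) (q : {mpoly R[n]}) :
  msym s (q \mPo sqt R n) = msym s q \mPo sqt R n.
Proof.
rewrite msym_comp comp_mpolyA msym_mPo; apply: comp_ext => i.
by rewrite !tnth_mktuple rmorphXn /= comp_mpolyXt tnth_mktuple.
Qed.

Lemma sym_sqt n (q : {mpoly R[n]}) : q \mPo sqt R n \is symmetric -> q \is symmetric.
Proof.
move/issymP => H; apply/issymP => s; apply: (@sqt_inj R n).
by rewrite /= -msym_sqt H.
Qed.

Lemma homog_sqt n d (q : {mpoly R[n]}) :
  q \mPo sqt R n \is (d * 2).-homog -> q \is d.-homog.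
Proof.
move=> H; apply/dhomogP => m mq.
have : (m *+ 2)%MM \in msupp (q \mPo sqt R n).
  by rewrite mcoeff_msupp mcoeff_sqt -mcoeff_msupp.
move/(dhomog_mf H) => /=; rewrite mdegMn => /eqP; rewrite eqn_pmul2r //.
by move/eqP.
Qed.

End Gen2.

Section Signs.
Context (R : comNzRingType).

Definition sgs n (s : {ffun 'I_n -> bool}) : {mpoly R[n.+1]} :=
  \sum_(i < n) (-1)^+(s i) *: 'X_(lift ord0 i).
Definition lf n (s : {ffun 'I_n -> bool}) : {mpoly R[n.+1]} := 'X_ord0 + sgs s.
Definition Dn n : {mpoly R[n.+1]} := \prod_(s : {ffun 'I_n -> bool}) lf s.
Definition Le n (e : {ffun 'I_n -> bool}) : {mpoly R[n]} :=
  \sum_(j < n) (-1)^+(e j) *: 'X_j.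
Definition ct n (c : {mpoly R[n.+1]}) : n.+1.-tuple {mpoly R[n.+1]} :=
  [tuple if j == ord0 then c else 'X_j | j < n.+1].
Definition flc n (r : {ffun 'I_n -> bool}) (j : 'I_n.+1) : R :=
  if unlift ord0 j is Some i then (-1)^+(r i) else 1.
Definition fl n (r : {ffun 'I_n -> bool}) : n.+1.-tuple {mpoly R[n.+1]} :=
  [tuple flc r j *: 'X_j | j < n.+1].
Definition xorf n (s r : {ffun 'I_n -> bool}) : {ffun 'I_n -> bool} :=
  [ffun i => s i (+) r i].
Definition negf n (s : {ffun 'I_n -> bool}) : {ffun 'I_n -> bool} :=
  [ffun i => ~~ s i].

Lemma tnth_fl n (r : {ffun 'I_n -> bool}) j : tnth (fl r) j = flc r j *: 'X_j.
Proof. by rewrite tnth_mktuple. Qed.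
Lemma tnth_ct n (c : {mpoly R[n.+1]}) j :
  tnth (ct c) j = if j == ord0 then c else 'X_j.
Proof. by rewrite tnth_mktuple. Qed.

Lemma flc0 n r : @flc n r ord0 = 1. Proof. by rewrite /flc unlift_none. Qed.
Lemma flcS n r i : @flc n r (lift ord0 i) = (-1)^+(r i).
Proof. by rewrite /flc liftK. Qed.
Lemma flc_sq n r j : @flc n r j * flc r j = 1.
Proof. by rewrite /flc; case: unlift => [i|]; rewrite ?mulr1 // -expr2 sqrr_sign. Qed.

Lemma comp_sgs n k (s : {ffun 'I_n -> bool}) (t : n.+1.-tuple {mpoly R[k]}) :
  sgs s \mPo t = \sum_(i < n) (-1)^+(s i) *: tnth t (lift ord0 i).
Proof.
rewrite /sgs linear_sum; apply: eq_bigr => i _.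
by rewrite linearZ /= comp_mpolyXt.
Qed.

Lemma sgs_fl n (s r : {ffun 'I_n -> bool}) : sgs s \mPo fl r = sgs (xorf s r).
Proof.
rewrite comp_sgs; apply: eq_bigr => i _.
by rewrite tnth_mktuple flcS scalerA -signr_addb ffunE.
Qed.

Lemma X0_fl n (r : {ffun 'I_n -> bool}) : 'X_ord0 \mPo fl r = 'X_ord0.
Proof. by rewrite comp_mpolyXt tnth_mktuple flc0 scale1r. Qed.

Lemma lf_fl n (s r : {ffun 'I_n -> bool}) : lf s \mPo fl r = lf (xorf s r).
Proof. by rewrite /lf comp_mpolyD X0_fl sgs_fl. Qed.

Lemma xorfK n (s r : {ffun 'I_n -> bool}) : xorf (xorf s r) r = s.
Proof. by apply/ffunP => i; rewrite !ffunE addbK. Qed.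

Lemma Dn_fl n (r : {ffun 'I_n -> bool}) : Dn n \mPo fl r = Dn n.
Proof.
rewrite /Dn rmorph_prod /=.
under eq_bigr do rewrite lf_fl.
rewrite [RHS](reindex_inj (h := fun s => xorf s r)) //.
by move=> a b /(congr1 (fun s => xorf s r)); rewrite !xorfK.
Qed.

Lemma comp_sqt_fl n (q : {mpoly R[n.+1]}) (r : {ffun 'I_n -> bool}) :
  (q \mPo sqt R n.+1) \mPo fl r = q \mPo sqt R n.+1.
Proof.
rewrite comp_mpolyA; apply: comp_ext => i.
rewrite !tnth_mktuple rmorphXn /= comp_mpolyXt tnth_mktuple exprZn.
by rewrite expr2 flc_sq scale1r.
Qed.

Lemma fl_invol n (r : {ffun 'I_n -> bool}) (p : {mpoly R[n.+1]}) :
  (p \mPo fl r) \mPo fl r = p.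
Proof.
rewrite comp_mpolyA; apply: comp_id_tuple => i.
by rewrite tnth_mktuple tnth_fl comp_mpolyZ comp_mpolyXt tnth_fl scalerA flc_sq scale1r.
Qed.

Lemma ct_tnthS n (c : {mpoly R[n.+1]}) i : tnth (ct c) (lift ord0 i) = 'X_(lift ord0 i).
Proof. by rewrite tnth_mktuple eq_sym (negbTE (neq_lift _ _)). Qed.

Lemma X0_ct n (c : {mpoly R[n.+1]}) : 'X_ord0 \mPo ct c = c.
Proof. by rewrite comp_mpolyXt tnth_mktuple eqxx. Qed.

Lemma sgs_ct n (s : {ffun 'I_n -> bool}) (c : {mpoly R[n.+1]}) : sgs s \mPo ct c = sgs s.
Proof. by rewrite comp_sgs; apply: eq_bigr => i _; rewrite ct_tnthS. Qed.

Lemma ct_comp n (p c d : {mpoly R[n.+1]}) :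
  (p \mPo ct c) \mPo ct d = p \mPo ct (c \mPo ct d).
Proof.
rewrite comp_mpolyA; apply: comp_ext => j; rewrite tnth_mktuple !tnth_ct.
case: (j =P ord0) => [//|/eqP nj].
by rewrite comp_mpolyXt tnth_ct (negbTE nj).
Qed.

Lemma ct_X0 n (p : {mpoly R[n.+1]}) : p \mPo ct 'X_ord0 = p.
Proof. by apply: comp_id_tuple => j; rewrite tnth_ct; case: eqP => [->|]. Qed.

End Signs.

Section Signs2.
Context (R : comNzRingType).
Local Notation sgs := (@sgs R).
Local Notation lf := (@lf R).
Local Notation Dn := (@Dn R).
Local Notation ct := (@ct R).
Local Notation fl := (@fl R).
Local Notation Le := (@Le R).

Lemma X0_div n (P : {mpoly R[n.+1]}) :
  P \mPo ct 0 = 0 -> exists Q, P = 'X_ord0 * Q.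
Proof.
move=> H.
pose P0 := \sum_(m <- msupp P | m ord0 == 0%N) P@_m *: 'X_[m].
pose Q := \sum_(m <- msupp P | m ord0 != 0%N) P@_m *: 'X_[m - U_(ord0)].
have eP : P = P0 + 'X_ord0 * Q.
  rewrite {1}[P]mpolyE (bigID (fun m : 'X_{1..n.+1} => m ord0 == 0%N)) /=; congr (_ + _).
  rewrite mulr_sumr; apply: eq_bigr => m nz.
  rewrite -scalerAr -mpolyXD addmC submK //.
  apply/mnm_lepP => i; rewrite mnm1E; case: eqP => [<-|]; last by [].
  by rewrite lt0n.
have eP0 : P0 \mPo ct 0 = P0.
  rewrite linear_sum; apply: eq_bigr => m /eqP m0.
  rewrite linearZ /= comp_mpolyX [in RHS]mpolyXE_id; congr (_ *: _).
  apply: eq_bigr => j _; rewrite tnth_ct; case: eqP => [->|//].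
  by rewrite m0 !expr0.
have : P \mPo ct 0 = P0.
  by rewrite {1}eP comp_mpolyD eP0 rmorphM /= X0_ct mul0r addr0.
rewrite H => P00; exists Q; by rewrite eP -P00 add0r.
Qed.

Lemma lin_div n (s : {ffun 'I_n -> bool}) (p : {mpoly R[n.+1]}) :
  p \mPo ct (- sgs s) = 0 -> exists q, p = lf s * q.
Proof.
move=> H; set P := p \mPo ct ('X_ord0 - sgs s).
have HP : P \mPo ct 0 = 0.
  by rewrite /P ct_comp comp_mpolyB X0_ct sgs_ct sub0r.
case: (X0_div HP) => Q eQ; exists (Q \mPo ct (lf s)).
have <- : P \mPo ct (lf s) = p.
  by rewrite /P ct_comp comp_mpolyB X0_ct sgs_ct /lf addrK ct_X0.
by rewrite eQ rmorphM /= X0_ct.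
Qed.

Lemma ct_fl n (s r : {ffun 'I_n -> bool}) (p : {mpoly R[n.+1]}) :
  (p \mPo ct (- sgs (xorf s r))) \mPo fl r = (p \mPo fl r) \mPo ct (- sgs s).
Proof.
rewrite !comp_mpolyA; apply: comp_ext => j; rewrite !tnth_mktuple.
case: (unliftP ord0 j) => [i ->|->].
  rewrite eq_sym (negbTE (neq_lift _ _)) comp_mpolyXt tnth_fl.
  by rewrite comp_mpolyZ comp_mpolyXt ct_tnthS.
by rewrite eqxx flc0 scale1r X0_ct comp_mpolyN sgs_fl xorfK.
Qed.

Lemma meval_sgs n (s : {ffun 'I_n -> bool}) (v : 'I_n.+1 -> R) :
  (sgs s).@[v] = \sum_(i < n) (-1)^+(s i) * v (lift ord0 i).
Proof.
rewrite /sgs raddf_sum; apply: eq_bigr => i _.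
by rewrite /= mevalZ mevalXU.
Qed.

Lemma meval_lf n (s : {ffun 'I_n -> bool}) (v : 'I_n.+1 -> R) :
  (lf s).@[v] = v ord0 + \sum_(i < n) (-1)^+(s i) * v (lift ord0 i).
Proof. by rewrite /lf mevalD mevalXU meval_sgs. Qed.

Definition fcons n (b : bool) (s : {ffun 'I_n -> bool}) : {ffun 'I_n.+1 -> bool} :=
  [ffun j => if unlift ord0 j is Some i then s i else b].

Lemma fcons0 n b (s : {ffun 'I_n -> bool}) : fcons b s ord0 = b.
Proof. by rewrite ffunE unlift_none. Qed.
Lemma fconsS n b (s : {ffun 'I_n -> bool}) i : fcons b s (lift ord0 i) = s i.
Proof. by rewrite ffunE liftK. Qed.

Lemma big_fcons (T : Type) (idx : T) (op : Monoid.com_law idx) n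
   (F : {ffun 'I_n.+1 -> bool} -> T) :
  \big[op/idx]_e F e =
  \big[op/idx]_(b : bool) \big[op/idx]_(s : {ffun 'I_n -> bool}) F (fcons b s).
Proof.
rewrite pair_big /=.
rewrite (reindex (fun p : bool * {ffun 'I_n -> bool} => fcons p.1 p.2)) /=.
  by [].
exists (fun e => (e ord0, [ffun i => e (lift ord0 i)])) => [[b s] _|e _] /=.
  congr pair; first exact: fcons0.
  by apply/ffunP => i; rewrite ffunE fconsS.
apply/ffunP => j; rewrite ffunE; case: unliftP => [i ->|->] //.
by rewrite ffunE.
Qed.

End Signs2.

Section Signs3.
Context (R : comNzRingType).
Local Notation sgs := (@sgs R).
Local Notation lf := (@lf R).
Local Notation Dn := (@Dn R).
Local Notation ct := (@ct R).
Local Notation fl := (@fl R).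
Local Notation Le := (@Le R).

Lemma card_sign (S : comNzRingType) n : (-1) ^+ #|{ffun 'I_n.+1 -> bool}| = 1 :> S.
Proof. by rewrite card_ffun card_bool card_ord -signr_odd oddX. Qed.

Lemma prod_m1 (S : comNzRingType) n : \prod_(s : {ffun 'I_n.+1 -> bool}) (-1) = 1 :> S.
Proof. by rewrite prodr_const card_sign. Qed.

Lemma prod_sign n (i : 'I_n.+2) :
  \prod_(s : {ffun 'I_n.+2 -> bool}) (-1)^+(s i) = 1 :> R.
Proof.
rewrite big_fcons big_bool /=.
case: (unliftP ord0 i) => [i' ->|->].
  under eq_bigr do rewrite fconsS.
  under [X in _ * X]eq_bigr do rewrite fconsS.
  rewrite -expr2 -prodrXl; apply: big1 => s _; exact: sqrr_sign.
under eq_bigr do rewrite fcons0.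
under [X in _ * X]eq_bigr do rewrite fcons0.
by rewrite expr1 (prod_m1 R n) big1 // mulr1.
Qed.

Lemma Le_fcons n b (s : {ffun 'I_n -> bool}) :
  Le (fcons b s) = (-1)^+b *: 'X_ord0 + sgs s.
Proof.
rewrite /Le big_ord_recl fcons0; congr (_ + _); apply: eq_bigr => i _.
by rewrite fconsS.
Qed.

Lemma sgs_negf n (s : {ffun 'I_n -> bool}) : sgs (negf s) = - sgs s.
Proof.
rewrite /sgs -sumrN; apply: eq_bigr => i _.
by rewrite ffunE signrN scaleNr.
Qed.

Lemma negfK n : involutive (@negf n).
Proof. by move=> s; apply/ffunP => i; rewrite !ffunE negbK. Qed.

Lemma full_prod n :
  \prod_(e : {ffun 'I_n.+2 -> bool}) Le e = Dn n.+1 ^+ 2.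
Proof.
rewrite big_fcons big_bool /= expr2; congr (_ * _).
  have E s : Le (fcons true s) = (-1) * lf (negf s).
    by rewrite Le_fcons /lf sgs_negf expr1 scaleN1r mulN1r opprD opprK.
  under eq_bigr do rewrite E.
  rewrite big_split /= prod_m1 mul1r /Dn.
  rewrite [RHS](reindex_inj (h := @negf n.+1)) //.
  exact: inv_inj (@negfK n.+1).
by apply: eq_bigr => s _; rewrite Le_fcons expr0 scale1r.
Qed.

Lemma Le_msym n (s : 'S_n) (e : {ffun 'I_n -> bool}) :
  msym s (Le e) = Le [ffun j => e ((s^-1)%g j)].
Proof.
rewrite msym_comp /Le linear_sum [RHS](reindex_inj (@perm_inj _ s)) /=.
apply: eq_bigr => j _; rewrite linearZ /= comp_mpolyXt tnth_mktuple ffunE.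
by rewrite permK.
Qed.

Lemma full_msym n (s : 'S_n) :
  msym s (\prod_(e : {ffun 'I_n -> bool}) Le e) = \prod_(e : {ffun 'I_n -> bool}) Le e.
Proof.
rewrite rmorph_prod /=; under eq_bigr do rewrite Le_msym.
rewrite [RHS](reindex_inj (h := fun e : {ffun 'I_n -> bool} =>
   [ffun j => e ((s^-1)%g j)])) //.
move=> e1 e2 /ffunP H; apply/ffunP => j; have := H (s j).
by rewrite !ffunE permK.
Qed.

Lemma lf_homog n (s : {ffun 'I_n -> bool}) : lf s \is 1.-homog.
Proof.
rewrite /lf rpredD //; first by rewrite dhomogX /= mdeg1.
by apply: rpred_sum => i _; rewrite rpredZ // dhomogX /= mdeg1.
Qed.

Lemma Dn_homog n : Dn n \is (2 ^ n).-homog.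
Proof.
have H (r : seq {ffun 'I_n -> bool}) : \prod_(s <- r) lf s \is (size r).-homog.
  elim: r => [|x r IH]; first by rewrite big_nil; exact: dhomog1.
  by rewrite big_cons; exact: (dhomogM (lf_homog x) IH).
have sz : size (index_enum {ffun 'I_n -> bool}) = (2 ^ n)%N.
  by rewrite [index_enum _]unlock -enumT -cardT card_ffun card_bool card_ord.
by rewrite -sz; apply: H.
Qed.

Lemma sum_lift_ind n (c : 'I_n -> R) i0 :
  \sum_(i < n) c i * (lift ord0 i == lift ord0 i0 :> 'I_n.+1)%:R = c i0.
Proof.
rewrite (bigD1 i0) //= eqxx mulr1 big1 ?addr0 // => i ne.
by rewrite (inj_eq (@lift_inj _ ord0)) (negbTE ne) mulr0.
Qed.

Lemma Dn_eval0 n : (Dn n).@[fun j => (j == ord0)%:R] = 1.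
Proof.
rewrite rmorph_prod /=; apply: big1 => s _; rewrite meval_lf eqxx big1 ?addr0 //.
by move=> i _; rewrite eq_sym (negbTE (neq_lift _ _)) mulr0.
Qed.

Lemma Dn_evalk n (k : 'I_n.+3) : (Dn n.+2).@[fun j => (j == k)%:R] = 1.
Proof.
case: (unliftP ord0 k) => [i0 ->|->]; last exact: Dn_eval0.
rewrite rmorph_prod /= -[RHS](prod_sign i0); apply: eq_bigr => s _.
by rewrite meval_lf (negbTE (neq_lift _ _)) add0r sum_lift_ind.
Qed.

Lemma Dn_evalz n : (Dn n).@[fun _ => 0] = 0.
Proof.
rewrite rmorph_prod /= (bigD1 [ffun => false]) //= meval_lf big1 ?addr0 ?mul0r //.
by move=> i _; rewrite mulr0.
Qed.

End Signs3.

Section NumPart.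
Context (R : numFieldType).
Import Num.Theory.
Local Notation sgs := (@sgs R).
Local Notation lf := (@lf R).
Local Notation Dn := (@Dn R).
Local Notation ct := (@ct R).
Local Notation fl := (@fl R).
Local Notation Le := (@Le R).

Lemma one_neq_m1 : (1 : R) != -1.
Proof.
apply/eqP => e; have : (1 : R) *+ 2 == 0 by rewrite mulr2n {1}e addNr.
by rewrite mulrn_eq0 oner_eq0.
Qed.

Lemma Dn_sym n : Dn n.+2 \is symmetric.
Proof.
apply/issymP => s.
have h : msym s (Dn n.+2) ^+ 2 = Dn n.+2 ^+ 2.
  by rewrite -rmorphXn /= -full_prod full_msym.
move/eqP: h; rewrite eqf_sqr => /orP [/eqP //|/eqP H]; exfalso.
have := congr1 (meval (fun j => (j == ord0)%:R)) H.
rewrite msym_comp comp_mpoly_meval mevalN.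
rewrite (meval_eq (v2 := fun j => (j == (s^-1)%g ord0)%:R)); last first.
  move=> j; rewrite tnth_mktuple mevalXU.
  by rewrite -(inj_eq (@perm_inj _ (s^-1)%g)) permK.
rewrite Dn_evalk Dn_eval0 => /eqP; by rewrite (negbTE one_neq_m1).
Qed.

Lemma coef_fl1 n (p : {mpoly R[n.+1]}) (i : 'I_n) m :
  (p \mPo fl [ffun i' => i' == i])@_m = p@_m * (-1)^+(m (lift ord0 i)).
Proof.
have eX m' : 'X_[m'] \mPo fl [ffun i' => i' == i] =
             (-1)^+(m' (lift ord0 i)) *: 'X_[m'].
  rewrite comp_mpolyX [in RHS]mpolyXE_id.
  under eq_bigr do rewrite tnth_fl exprZn.
  rewrite scaler_prod; congr (_ *: _).
  rewrite (bigD1 (lift ord0 i)) //= flcS ffunE eqxx expr1 big1 ?mulr1 // => j nj.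
  rewrite /flc; case: unliftP nj => [i' ->|->] nj; last exact: expr1n.
  rewrite ffunE; case: eqP => [ei|_]; last by rewrite expr0 expr1n.
  by rewrite ei eqxx in nj.
rewrite comp_mpolyEX.
rewrite (eq_bigr (fun m' => (p@_m' * (-1)^+(m' (lift ord0 i))) *: 'X_[id m'])).
  by move: (mcoeff_sumg p (fun m' => (-1)^+(m' (lift ord0 i))) m (@inj_id _)) => /= ->.
by move=> m' _; rewrite eX scalerA.
Qed.

Lemma even_fl n (p : {mpoly R[n.+1]}) :
  (forall r, p \mPo fl r = p) ->
  forall m, m \in msupp p -> forall i, ~~ odd (m (lift ord0 i)).
Proof.
move=> H m mp i; apply/negP => od.
have := coef_fl1 p i m; rewrite H -signr_odd od expr1 mulrN1 => e.
have : p@_m *+ 2 == 0 by rewrite mulr2n {1}e addNr.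
rewrite mulrn_eq0 /=.
by rewrite mcoeff_eq0 mp.
Qed.

Lemma even0 n d (p : {mpoly R[n.+1]}) m :
  p \is d.-homog -> ~~ odd d -> m \in msupp p ->
  (forall i, ~~ odd (m (lift ord0 i))) -> ~~ odd (m ord0).
Proof.
move=> hp od mp H.
have := dhomog_mf hp mp; rewrite /= mdegE big_ord_recl => e.
have hs : ~~ odd (\sum_(i < n) m (lift ord0 i)).
  apply: (big_ind (fun x => ~~ odd x)) => // x y hx hy.
  by rewrite oddD (negbTE hx) (negbTE hy).
by move: od; rewrite -e oddD (negbTE hs) addbF.
Qed.

Lemma Dn_even n : exists q, Dn n.+1 = q \mPo sqt R n.+2.
Proof.
apply: halve => m mp j; case: (unliftP ord0 j) => [i ->|->].
  exact: (even_fl (@Dn_fl R n.+1) mp).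
apply: (even0 (Dn_homog R n.+1) _ mp); first by rewrite oddX.
by move=> i; exact: (even_fl (@Dn_fl R n.+1) mp).
Qed.

End NumPart.

Section Irr.
Context (R : numFieldType).
Import Num.Theory.
Local Notation sgs := (@sgs R).
Local Notation lf := (@lf R).
Local Notation Dn := (@Dn R).
Local Notation ct := (@ct R).
Local Notation fl := (@fl R).

Lemma Dn_ct n (s : {ffun 'I_n -> bool}) : Dn n \mPo ct (- sgs s) = 0.
Proof.
rewrite /Dn rmorph_prod /= (bigD1 s) //= /lf comp_mpolyD X0_ct sgs_ct addNr.
by rewrite mul0r.
Qed.

Lemma lf_ct_neq n (s s' : {ffun 'I_n -> bool}) :
  s' != s -> lf s' \mPo ct (- sgs s) != 0.
Proof.
move=> ne.
have [i0 hi] : exists i, s' i != s i.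
  apply/existsP; apply: contraR ne => /existsPn H; apply/eqP/ffunP => i.
  by have := H i; rewrite negbK => /eqP.
apply/eqP => /(congr1 (meval (fun j => (j == lift ord0 i0)%:R))).
rewrite meval0 /lf comp_mpolyD X0_ct sgs_ct mevalD mevalN !meval_sgs !sum_lift_ind.
have -> : s' i0 = ~~ s i0 by move: hi; case: (s' i0); case: (s i0).
rewrite signrN -opprD => /eqP; rewrite oppr_eq0 -mulr2n mulrn_eq0 /=.
by rewrite signr_eq0.
Qed.

Lemma div_list n (p : {mpoly R[n.+1]}) (L : seq {ffun 'I_n -> bool}) :
  uniq L -> (forall s, s \in L -> p \mPo ct (- sgs s) = 0) ->
  exists q, p = (\prod_(s <- L) lf s) * q.
Proof.
elim: L p => [|s L IH] p uL H; first by exists p; rewrite big_nil mul1r.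
case/andP: uL => sL uL.
case: (lin_div (H s (mem_head _ _))) => p1 ep.
have H1 s' : s' \in L -> p1 \mPo ct (- sgs s') = 0.
  move=> s'L; have := H s'; rewrite in_cons s'L orbT => /(_ isT).
  rewrite ep rmorphM /= => /eqP; rewrite mulf_eq0 => /orP [|/eqP //].
  have ne : s != s' by apply: contraNneq sL => ->.
  by rewrite (negbTE (lf_ct_neq ne)).
case: (IH p1 uL H1) => q eq; exists q.
by rewrite ep eq big_cons mulrA.
Qed.

Lemma irr_main n (P : {mpoly R[n.+1]}) :
  P \mPo sqt R n.+1 = Dn n -> irreducible_mpoly P.
Proof.
move=> HP.
have Dnz : Dn n != 0.
  apply/eqP => /(congr1 (meval (fun j => (j == ord0)%:R))).
  by rewrite Dn_eval0 meval0 => /eqP; rewrite oner_eq0.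
have side A B : P = A * B ->
    (A \mPo sqt R n.+1) \mPo ct (- sgs [ffun => false]) = 0 -> B \is a GRing.unit.
  move=> eP Ha.
  set a := A \mPo sqt R n.+1; set b := B \mPo sqt R n.+1.
  have eab : Dn n = a * b by rewrite -HP eP rmorphM.
  have Hall s : s \in index_enum {ffun 'I_n -> bool} -> a \mPo ct (- sgs s) = 0.
    move=> _; set r := xorf [ffun => false] s.
    have : (a \mPo ct (- sgs (xorf [ffun => false] r))) \mPo fl r = 0.
      by rewrite ct_fl /a comp_sqt_fl Ha.
    have -> : xorf [ffun => false] r = s by apply/ffunP => i; rewrite !ffunE.
    by move=> h; rewrite -(fl_invol r (a \mPo _)) h comp_mpoly0.
  case: (div_list (index_enum_uniq _) Hall) => q eq.
  have qb1 : q * b = 1.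
    apply: (mulfI Dnz); rewrite mulr1 mulrA.
    by rewrite [X in X * b = _](_ : _ = a) -?eab // eq.
  have ub : b \is a GRing.unit by apply/unitrP; exists q; split; rewrite // mulrC.
  have /andP [/eqP eb _] : (b == (b@_0)%:MP) && (b@_0 \in GRing.unit) := ub.
  have cz : b@_0 != 0.
    apply: contraTneq isT => c0; move: qb1; rewrite eb c0 mpolyC0 mulr0.
    by move/eqP; rewrite eq_sym oner_eq0.
  have eB : B = (b@_0)%:MP.
    by apply: (@sqt_inj R n.+1); rewrite /= comp_mpolyC -eb.
  apply/unitrP; exists ((b@_0)^-1)%:MP; rewrite eB -!mpolyCM mulVf // mulfV //.

split.
- apply/eqP => P0; move: Dnz; by rewrite -HP P0 comp_mpoly0 eqxx.
- apply/negP => /unitrP [y [hy _]].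
  have := congr1 (fun p => (p \mPo sqt R n.+1).@[fun _ => 0]) hy.
  rewrite /= rmorphM /= HP mevalM Dn_evalz mulr0 comp_mpoly1 meval1 => /eqP.
  by rewrite eq_sym oner_eq0.
- move=> A B eP; have := @Dn_ct n [ffun => false].
  rewrite -HP eP !rmorphM /= => /eqP; rewrite mulf_eq0 => /orP [/eqP Ha|/eqP Hb].
    by right; exact: (side A B eP Ha).
  by left; apply: (side B A) => //; rewrite mulrC.
Qed.

End Irr.

Section MapZt.

Lemma map_comp (R S : comNzRingType) (f : {rmorphism R -> S}) n k
  (p : {mpoly R[n]}) (t : n.-tuple {mpoly R[k]}) :
  map_mpoly f (p \mPo t) =
  map_mpoly f p \mPo [tuple map_mpoly f (tnth t i) | i < n].
Proof.
rewrite [p]mpolyE.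
elim: (msupp p) => [|m r IH]; first by rewrite !big_nil !raddf0.
rewrite !big_cons !raddfD /= IH; congr (_ + _).
rewrite comp_mpolyZ !map_mpolyZ comp_mpolyZ map_mpolyX; congr (_ *: _).
rewrite !comp_mpolyX rmorph_prod /=; apply: eq_bigr => i _.
by rewrite rmorphXn tnth_mktuple.
Qed.

Lemma map_Dn (F : numFieldType) (f : {rmorphism rat -> F}) n :
  map_mpoly f (Dn rat n) = Dn F n.
Proof.
rewrite /Dn rmorph_prod; apply: eq_bigr => s _ /=.
rewrite /lf rmorphD /= map_mpolyX /sgs rmorph_sum; congr (_ + _).
by apply: eq_bigr => i _ /=; rewrite map_mpolyZ map_mpolyX rmorph_sign.
Qed.

Lemma map_sqt (R S : comNzRingType) (f : {rmorphism R -> S}) n :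
  [tuple map_mpoly f (tnth (sqt R n) i) | i < n] = sqt S n.
Proof.
apply: eq_from_tnth => i; rewrite !tnth_mktuple rmorphXn /=.
by rewrite map_mpolyX.
Qed.

Context (R : comNzRingType).

Definition zt n : n.+1.-tuple {mpoly R[n]} :=
  [tuple if unlift ord0 j is Some i then 'X_i else 0 | j < n.+1].

Lemma zt_sqt n (q : {mpoly R[n.+1]}) :
  (q \mPo zt n) \mPo sqt R n = (q \mPo sqt R n.+1) \mPo zt n.
Proof.
rewrite !comp_mpolyA; apply: comp_ext => j; rewrite !tnth_mktuple rmorphXn /=.
rewrite comp_mpolyXt tnth_mktuple.
case: (unliftP ord0 j) => [i _|_].
  by rewrite comp_mpolyXt tnth_mktuple.
by rewrite comp_mpoly0 expr0n.
Qed.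

Lemma Dn_zt n : Dn R n \mPo zt n = \prod_(e : {ffun 'I_n -> bool}) Le R e.
Proof.
rewrite /Dn rmorph_prod; apply: eq_bigr => s _ /=.
rewrite /lf comp_mpolyD comp_mpolyXt tnth_mktuple unlift_none add0r comp_sgs.
by apply: eq_bigr => i _; rewrite tnth_mktuple liftK.
Qed.

End MapZt.

Lemma DeltaSqrtE : DeltaSqrt = Dn rat 4.
Proof.
apply: eq_bigr => s _; rewrite /sqrt_factor /lf /sgs; congr (_ + _).
by apply: eq_bigr => i _; rewrite mulr_sign scaler_sign.
Qed.

Lemma set_x0_zeroE : set_x0_zero = zt rat 4.
Proof.
apply: eq_from_tnth => j; rewrite tnth_mktuple.
case: (unliftP ord0 j) => [i ->|->]; last by rewrite /set_x0_zero /tnth.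
case: i => [[|[|[|[|k]]]] Hk] //=; rewrite /set_x0_zero /tnth /=;
  by congr (mpolyX _ (mnm1 _)); apply: val_inj.
Qed.

Theorem mainTheorem7 :
  exists Delta' : {mpoly rat[5]},
    DeltaSqrt = Delta' \mPo squares 5 /\
    Delta' \is symmetric /\ Delta' \is 8.-homog /\ abs_irreducible_rat Delta' /\
    (exists D : {mpoly rat[4]},
       D \is symmetric /\ D \is 4.-homog /\ Delta' \mPo set_x0_zero = D ^+ 2).
Proof.
have [q eq] := Dn_even rat 3.
have [D eD] := Dn_even rat 2.
exists q; split; first by rewrite DeltaSqrtE eq.
split; first by apply: sym_sqt; rewrite -eq; exact: Dn_sym.
split; first by apply: (homog_sqt (d := 8)); rewrite -eq; exact: Dn_homog.
split.
  rewrite /abs_irreducible_rat; apply: (irr_main (n := 4)).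
  by rewrite -(map_sqt (ratr : {rmorphism rat -> algC}) 5) -map_comp -eq map_Dn.
exists D; split; first by apply: sym_sqt; rewrite -eD; exact: Dn_sym.
split; first by apply: (homog_sqt (d := 4)); rewrite -eD; exact: Dn_homog.
apply: (@sqt_inj rat 4); rewrite /= set_x0_zeroE zt_sqt -eq Dn_zt full_prod.
by rewrite rmorphXn /= -eD.
Qed.
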